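(* Let $Y$ be a positive integrable random variable with mean $m$ and $X=Y-m$. In each of the following cases $X$ is heavy on left: (i) $Y$ has a Gamma distribution with parameters $a,\lambda>0$ (in particular an exponential distribution with parameter $\lambda>0$); (ii) $Y=a\exp(Z)$ with $a>0$ and $Z$ exponential with parameter $\lambda>0$ (Pareto distribution), whenever $Y$ is integrable; (iii) $Y=\exp(Z)$ with $Z\sim\mathcal{N}(\mu,\sigma^2)$, $\mu\in\mathbb{R}$, $\sigma^2>0$ (log-normal distribution).
   Context: For $a>0$ let $T_a(X)=\min(|X|,a)\,\mathrm{sign}(X)$. An integrable random variable $X$ is called heavy on left if $\mathbb{E}[X]=0$ and $\mathbb{E}[T_a(X)]\le0$ for all $a>0$. *)

(* Defs.v *)
From Stdlib Require Import Reals Lra.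
Open Scope R_scope.

Definition sgn (x : R) : R :=
  if Rlt_dec 0 x then 1 else if Rlt_dec x 0 then -1 else 0.

Definition T (a x : R) : R := Rmin (Rabs x) a * sgn x.

(* improper Riemann integral over (0, +oo): limit of int_u^v as u -> 0+, v -> +oo *)
Definition int_pos (f : R -> R) (l : R) : Prop :=
  (forall u v, 0 < u -> u <= v -> inhabited (Riemann_integrable f u v)) /\
  forall eps, 0 < eps -> exists d, 0 < d /\ exists B,
    forall u v (pr : Riemann_integrable f u v),
      0 < u -> u < d -> B < v -> u <= v -> Rabs (RiemannInt pr - l) < eps.

Definition int_R (f : R -> R) (l : R) : Prop :=
  (forall u v, u <= v -> inhabited (Riemann_integrable f u v)) /\
  forall eps, 0 < eps -> exists A,
    forall u v (pr : Riemann_integrable f u v),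
      u < - A -> A < v -> u <= v -> Rabs (RiemannInt pr - l) < eps.

(* Law of a random variable V = h(Z), Z having density p on (0,+oo) (resp. on R):
   expect g l  <->  g(V) is integrable and E[g(V)] = l. *)
Definition expect_pos (p h : R -> R) (g : R -> R) (l : R) : Prop :=
  (exists L, int_pos (fun z => Rabs (g (h z)) * p z) L) /\
  int_pos (fun z => g (h z) * p z) l.

Definition expect_R (p h : R -> R) (g : R -> R) (l : R) : Prop :=
  (exists L, int_R (fun z => Rabs (g (h z)) * p z) L) /\
  int_R (fun z => g (h z) * p z) l.

Definition heavy_on_left (E : (R -> R) -> R -> Prop) : Prop :=
  E (fun x => x) 0 /\
  forall a, 0 < a -> exists l, E (T a) l /\ l <= 0.

Definition gamma_density (C a lam : R) (y : R) : R :=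
  C * Rpower y (a - 1) * exp (- lam * y).
Definition exp_density (lam : R) (z : R) : R := lam * exp (- lam * z).
Definition normal_density (mu s2 : R) (z : R) : R :=
  / sqrt (2 * PI * s2) * exp (- (z - mu) ^ 2 / (2 * s2)).

(* Main.v *)
Require Import Defs.
From Stdlib Require Import Reals Lra Classical ClassicalEpsilon FunctionalExtensionality.
Open Scope R_scope.

Lemma D_ext f g x l l' : (forall y, f y = g y) -> l = l' ->
  derivable_pt_lim f x l -> derivable_pt_lim g x l'.
Proof. intros H H' D. subst l'. replace g with f; auto. apply functional_extensionality; auto. Qed.

Lemma D_plus f g x df dg : derivable_pt_lim f x df -> derivable_pt_lim g x dg ->
  derivable_pt_lim (fun y => f y + g y) x (df + dg).
Proof. intros; apply (derivable_pt_lim_plus f g); auto. Qed.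
Lemma D_minus f g x df dg : derivable_pt_lim f x df -> derivable_pt_lim g x dg ->
  derivable_pt_lim (fun y => f y - g y) x (df - dg).
Proof. intros; apply (derivable_pt_lim_minus f g); auto. Qed.
Lemma D_mult f g x df dg : derivable_pt_lim f x df -> derivable_pt_lim g x dg ->
  derivable_pt_lim (fun y => f y * g y) x (df * g x + f x * dg).
Proof. intros; apply (derivable_pt_lim_mult f g); auto. Qed.
Lemma D_comp f g x df dg : derivable_pt_lim f x df -> derivable_pt_lim g (f x) dg ->
  derivable_pt_lim (fun y => g (f y)) x (dg * df).
Proof. intros; apply (derivable_pt_lim_comp f g); auto. Qed.
Lemma D_const c x : derivable_pt_lim (fun _ => c) x 0.
Proof. apply (derivable_pt_lim_const c). Qed.
Lemma D_id x : derivable_pt_lim (fun y => y) x 1.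
Proof. apply derivable_pt_lim_id. Qed.
Lemma D_exp x : derivable_pt_lim exp x (exp x).
Proof. apply derivable_pt_lim_exp. Qed.
Lemma D_ln x : 0 < x -> derivable_pt_lim ln x (/ x).
Proof. apply derivable_pt_lim_ln. Qed.

Lemma C_of_D f x l : derivable_pt_lim f x l -> continuity_pt f x.
Proof. intros D. apply derivable_continuous_pt. exists l. exact D. Qed.

Lemma C_plus f g x : continuity_pt f x -> continuity_pt g x -> continuity_pt (fun y => f y + g y) x.
Proof. intros; apply (continuity_pt_plus f g); auto. Qed.
Lemma C_minus f g x : continuity_pt f x -> continuity_pt g x -> continuity_pt (fun y => f y - g y) x.
Proof. intros; apply (continuity_pt_minus f g); auto. Qed.
Lemma C_mult f g x : continuity_pt f x -> continuity_pt g x -> continuity_pt (fun y => f y * g y) x.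
Proof. intros; apply (continuity_pt_mult f g); auto. Qed.
Lemma C_comp f g x : continuity_pt f x -> continuity_pt g (f x) -> continuity_pt (fun y => g (f y)) x.
Proof. intros; apply (continuity_pt_comp f g); auto. Qed.
Lemma C_const c x : continuity_pt (fun _ => c) x.
Proof. apply (continuity_pt_const (fun _ => c)). intros a b; reflexivity. Qed.
Lemma C_id x : continuity_pt (fun y => y) x.
Proof. apply derivable_continuous_pt. exists 1. apply D_id. Qed.
Lemma C_abs x : continuity_pt Rabs x.
Proof. apply Rcontinuity_abs. Qed.
Lemma C_ext f g x : (forall y, f y = g y) -> continuity_pt f x -> continuity_pt g x.
Proof. intros H C. replace g with f; auto. apply functional_extensionality; auto. Qed.

Lemma T_alt a x : 0 < a -> T a x = (Rabs (x + a) - Rabs (x - a)) / 2.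
Proof.
  intros Ha. unfold T, sgn, Rmin.
  destruct (Rlt_dec 0 x); [|destruct (Rlt_dec x 0)];
  destruct (Rle_dec (Rabs x) a);
  repeat match goal with |- context [Rabs ?e] => destruct (Rcase_abs e) ; [rewrite (Rabs_left e) by lra | rewrite (Rabs_right e) by lra] end;
  try lra.
  all: repeat match goal with H : context [Rabs ?e] |- _ => destruct (Rcase_abs e) ; [rewrite (Rabs_left e) in H by lra | rewrite (Rabs_right e) in H by lra] end; lra.
Qed.

Lemma T_cont a x : 0 < a -> continuity_pt (T a) x.
Proof.
  intros Ha. apply C_ext with (f := fun y => (Rabs (y + a) - Rabs (y - a)) / 2).
  { intros; rewrite T_alt; auto. }
  unfold Rdiv. apply C_mult; [|apply C_const].
  apply C_minus; apply C_comp with (g := Rabs); try apply C_abs;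
  [apply C_plus|apply C_minus]; (apply C_id || apply C_const).
Qed.

Lemma T_abs a x : 0 < a -> Rabs (T a x) <= Rabs x.
Proof.
  intros Ha; rewrite T_alt by auto.
  repeat match goal with |- context [Rabs ?e] => destruct (Rcase_abs e) ; [rewrite (Rabs_left e) by lra | rewrite (Rabs_right e) by lra] end; lra.
Qed.

Lemma T_odd a x : 0 < a -> T a (- x) = - T a x.
Proof.
  intros Ha; rewrite !T_alt by auto.
  replace (-x + a) with (-(x - a)) by ring. replace (-x - a) with (-(x+a)) by ring.
  rewrite !Rabs_Ropp. lra.
Qed.

Lemma T_pos_le a x : 0 < a -> 0 <= x -> T a x - x <= 0.
Proof.
  intros Ha Hx; rewrite T_alt by auto.
  repeat match goal with |- context [Rabs ?e] => destruct (Rcase_abs e) ; [rewrite (Rabs_left e) by lra | rewrite (Rabs_right e) by lra] end; lra.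
Qed.

Lemma T_nonneg a x : 0 < a -> 0 <= x -> T a x = Rmin x a.
Proof.
  intros Ha Hx; rewrite T_alt by auto. unfold Rmin; destruct (Rle_dec x a);
  repeat match goal with |- context [Rabs ?e] => destruct (Rcase_abs e) ; [rewrite (Rabs_left e) by lra | rewrite (Rabs_right e) by lra] end; lra.
Qed.

Lemma Tc_sign a sg : 0 < a -> 0 <= sg ->
  exists c, 0 <= c <= 1 /\ (forall t, 0 <= t <= sg -> T a t - c * t >= 0)
   /\ (forall t, sg <= t -> T a t - c * t <= 0).
Proof.
  intros Ha Hs. destruct (Rle_dec sg a) as [H|H].
  - exists 1. split; [lra|split].
    + intros t Ht. rewrite T_nonneg by lra. unfold Rmin; destruct (Rle_dec t a); lra.
    + intros t Ht. rewrite T_nonneg by lra. unfold Rmin; destruct (Rle_dec t a); lra.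
  - exists (a / sg). assert (Hs' : 0 < sg) by lra.
    assert (0 <= a/sg <= 1).
    { split. apply Rlt_le; apply Rdiv_lt_0_compat; lra.
      apply Rmult_le_reg_r with sg; auto. unfold Rdiv; rewrite Rmult_assoc, Rinv_l by lra. lra. }
    split; auto. split.
    + intros t Ht. rewrite T_nonneg by lra. unfold Rmin; destruct (Rle_dec t a).
      * assert (a/sg * t <= 1 * t) by (apply Rmult_le_compat_r; lra). lra.
      * assert (a / sg * t <= a / sg * sg) by (apply Rmult_le_compat_l; lra).
        replace (a / sg * sg) with a in H1 by (field; lra). lra.
    + intros t Ht. rewrite T_nonneg by lra. unfold Rmin; destruct (Rle_dec t a).
      * lra.
      * assert (a / sg * sg <= a / sg * t) by (apply Rmult_le_compat_l; lra).
        replace (a / sg * sg) with a in H1 by (field; lra). lra.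
Qed.

Lemma dP f g x df dg l : derivable_pt_lim f x df -> derivable_pt_lim g x dg -> l = df + dg ->
  derivable_pt_lim (fun y => f y + g y) x l.
Proof. intros; subst; apply D_plus; auto. Qed.
Lemma dM f g x df dg l : derivable_pt_lim f x df -> derivable_pt_lim g x dg -> l = df - dg ->
  derivable_pt_lim (fun y => f y - g y) x l.
Proof. intros; subst; apply D_minus; auto. Qed.
Lemma dX f g x df dg l : derivable_pt_lim f x df -> derivable_pt_lim g x dg -> l = df * g x + f x * dg ->
  derivable_pt_lim (fun y => f y * g y) x l.
Proof. intros; subst; apply D_mult; auto. Qed.
Lemma dC f g x df dg l : derivable_pt_lim f x df -> derivable_pt_lim g (f x) dg -> l = dg * df ->
  derivable_pt_lim (fun y => g (f y)) x l.
Proof. intros; subst; apply D_comp; auto. Qed.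
Lemma dK c x l : l = 0 -> derivable_pt_lim (fun _ => c) x l.
Proof. intros; subst; apply D_const. Qed.
Lemma dI x l : l = 1 -> derivable_pt_lim (fun y => y) x l.
Proof. intros; subst; apply D_id. Qed.
Lemma dE f x df l : derivable_pt_lim f x df -> l = exp (f x) * df -> derivable_pt_lim (fun y => exp (f y)) x l.
Proof. intros; subst. apply D_comp; auto. apply D_exp. Qed.
Lemma dL f x df l : derivable_pt_lim f x df -> 0 < f x -> l = / f x * df -> derivable_pt_lim (fun y => ln (f y)) x l.
Proof. intros; subst. apply D_comp; auto. apply D_ln; auto. Qed.

Lemma dO f x df l : derivable_pt_lim f x df -> l = - df -> derivable_pt_lim (fun y => - f y) x l.
Proof. intros; subst. apply (derivable_pt_lim_opp f); auto. Qed.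

Ltac dauto := repeat (first [ eapply dK; reflexivity | eapply dI; reflexivity | eapply dM | eapply dP | eapply dX | eapply dE | eapply dL | eapply dO ]).

Lemma FTC_gen f P a b (pr : Riemann_integrable f a b) : a <= b ->
  (forall x, a <= x <= b -> continuity_pt f x) ->
  (forall x, a <= x <= b -> derivable_pt_lim P x (f x)) ->
  RiemannInt pr = P b - P a.
Proof.
  intros hab C D.
  rewrite (RiemannInt_P20 hab (FTC_P1 hab C) pr).
  set (Q := primitive hab (FTC_P1 hab C)).
  destruct (Req_dec a b) as [E|NE].
  - subst b. ring.
  - assert (hlt : a < b) by lra.
    destruct (MVT_cor2 (fun x => P x - Q x) (fun x => 0) a b hlt) as [c [Hc _]].
    + intros c Hc. apply D_ext with (f := fun x => P x - Q x) (l := f c - f c).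
      intros; reflexivity. ring. apply D_minus; auto.
      apply (RiemannInt_P28 (f:=f) hab C Hc).
    + lra.
Qed.

Lemma deriv_nonpos_le F F' a b : a <= b ->
  (forall x, a <= x <= b -> derivable_pt_lim F x (F' x)) ->
  (forall x, a <= x <= b -> F' x <= 0) -> F b <= F a.
Proof.
  intros hab D N. destruct (Req_dec a b) as [E|NE]. subst; lra.
  destruct (MVT_cor2 F F' a b) as [c [Hc Hc2]]; [lra| auto |].
  assert (F' c <= 0) by (apply N; lra).
  assert (F' c * (b - a) <= 0). { nra. } lra.
Qed.

Lemma RI_nonpos f a b (pr : Riemann_integrable f a b) : a <= b ->
  (forall x, a < x < b -> f x <= 0) -> RiemannInt pr <= 0.
Proof.
  intros hab H. 
  assert (H2 := RiemannInt_P19 pr (RiemannInt_P14 a b 0) hab).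
  rewrite RiemannInt_P15 in H2. unfold fct_cte in H2.
  assert (RiemannInt pr <= 0 * (b - a)). apply H2; auto. lra.
Qed.

Lemma RI_nonneg f a b (pr : Riemann_integrable f a b) : a <= b ->
  (forall x, a < x < b -> 0 <= f x) -> 0 <= RiemannInt pr.
Proof.
  intros hab H. 
  assert (H2 := RiemannInt_P19 (RiemannInt_P14 a b 0) pr hab).
  rewrite RiemannInt_P15 in H2. unfold fct_cte in H2.
  assert (0 * (b - a) <= RiemannInt pr). apply H2; auto. lra.
Qed.

Lemma pairing k l r l' r' u v s (pr : Riemann_integrable k u v) :
  0 <= s -> l 0 = r 0 -> l s = u -> r s <= v ->
  (forall t, 0 <= t <= s -> u <= l t <= r s /\ u <= r t <= r s) ->
  (forall t, 0 <= t <= s -> derivable_pt_lim l t (l' t) /\ derivable_pt_lim r t (r' t)) ->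
  (forall z, u <= z <= v -> continuity_pt k z) ->
  (forall t, 0 <= t <= s -> k (r t) * r' t - k (l t) * l' t <= 0) ->
  (forall z, r s <= z <= v -> k z <= 0) ->
  RiemannInt pr <= 0.
Proof.
  intros hs h0 hls hrs Rg Dv Ck Dn Tl.
  assert (huw : u <= r s) by (destruct (Rg s) as [_ [H1 H2]]; lra).
  assert (huv : u <= v) by lra.
  assert (C' : forall x, u <= x <= r s -> continuity_pt k x) by (intros; apply Ck; lra).
  set (Q := primitive huw (FTC_P1 huw C')).
  assert (DQ : forall x, u <= x <= r s -> derivable_pt_lim Q x (k x)).
  { intros x Hx. apply (RiemannInt_P28 (f:=k) huw C' Hx). }
  assert (Hphi : Q (r s) - Q (l s) <= Q (r 0) - Q (l 0)).
  { apply (deriv_nonpos_le (fun t => Q (r t) - Q (l t)) (fun t => k (r t) * r' t - k (l t) * l' t)); auto.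
    intros t Ht. destruct (Dv t Ht) as [Dl Dr]. destruct (Rg t Ht) as [[? ?] [? ?]].
    apply D_minus; apply D_comp; auto; apply DQ; lra. }
  rewrite h0, hls in Hphi.
  assert (pr1 : Riemann_integrable k u (r s)) by (apply (RiemannInt_P22 pr); lra).
  assert (pr2 : Riemann_integrable k (r s) v) by (apply (RiemannInt_P23 pr); lra).
  rewrite <- (RiemannInt_P25 pr1 pr2 pr) by lra.
  rewrite (RiemannInt_P20 huw (FTC_P1 huw C') pr1).
  fold Q.
  assert (RiemannInt pr2 <= 0) by (apply RI_nonpos; [lra| intros; apply Tl; lra]).
  lra.
Qed.

Lemma choose_c a w s : 0 < a -> 0 <= s ->
  (forall t1 t2, 0 <= t1 -> t1 <= t2 -> t2 <= s -> w t2 > 0 -> w t1 >= 0) ->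
  exists c, 0 <= c <= 1 /\ (forall t, 0 <= t <= s -> 0 <= (T a t - c * t) * w t)
    /\ (forall x, s <= x -> T a x - c * x <= 0).
Proof.
  intros Ha Hs Cr.
  destruct (classic (exists t, 0 <= t <= s /\ w t < 0)) as [Ex|NEx].
  - set (E := fun x => exists t, 0 <= t <= s /\ w t < 0 /\ x = - t).
    assert (bE : bound E). { exists 0. intros x [t [? [? ->]]]. lra. }
    assert (nE : exists x, E x). { destruct Ex as [t [? ?]]. exists (-t). exists t; auto. }
    destruct (completeness E bE nE) as [M [HM1 HM2]].
    set (sg := - M).
    assert (Hsg1 : forall t, 0 <= t <= s -> w t < 0 -> sg <= t).
    { intros t Ht Hw. unfold sg. assert (E (-t)) by (exists t; auto). apply HM1 in H. lra. }
    assert (Hsg2 : forall t, sg < t -> exists t', 0 <= t' <= s /\ w t' < 0 /\ t' < t).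
    { intros t Ht. apply NNPP. intro N.
      assert (is_upper_bound E (-t)).
      { intros x [t' [H1 [H2 ->]]]. destruct (Rle_dec t t') as [h|h]; [lra|].
        exfalso; apply N; exists t'; repeat split; try lra. }
      apply HM2 in H. unfold sg in Ht. lra. }
    assert (sg_rng : 0 <= sg <= s).
    { destruct Ex as [t [Ht Hw]]. split.
      - unfold sg. assert (is_upper_bound E 0). { intros x [t' [? [? ->]]]; lra. }
        apply HM2 in H. lra.
      - assert (sg <= t) by (apply Hsg1; auto). lra. }
    destruct (Tc_sign a sg Ha (proj1 sg_rng)) as [c [Hc [S1 S2]]].
    exists c. split; auto. split.
    + intros t Ht. destruct (Rlt_dec t sg) as [h|h].
      * assert (w t >= 0). { destruct (Rge_dec (w t) 0); auto. assert (sg <= t) by (apply Hsg1; lra). lra. }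
        assert (T a t - c * t >= 0) by (apply S1; lra). nra.
      * destruct (Req_dec t sg) as [e|e].
        { subst t. assert (T a sg - c * sg = 0). { assert (H1 := S1 sg). assert (H2 := S2 sg). lra. }
          rewrite H. lra. }
        destruct (Hsg2 t) as [t' [Ht' [Hw' Hlt]]]. lra.
        assert (w t <= 0). { destruct (Rle_dec (w t) 0); auto. assert (w t' >= 0) by (apply (Cr t' t); lra). lra. }
        assert (T a t - c * t <= 0) by (apply S2; lra). nra.
    + intros x Hx. apply S2. lra.
  - destruct (Tc_sign a s Ha Hs) as [c [Hc [S1 S2]]].
    exists c. split; auto. split.
    + intros t Ht. assert (w t >= 0). { destruct (Rge_dec (w t) 0); auto. exfalso; apply NEx; exists t; split; auto; lra. }
      assert (T a t - c * t >= 0) by (apply S1; lra). nra.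
    + auto.
Qed.

Definition of_inh {A : Type} (h : inhabited A) : A := epsilon h (fun _ => True).

Lemma mono_dom g u' u v v' (pr : Riemann_integrable g u v) (pr' : Riemann_integrable g u' v') :
  u' <= u -> u <= v -> v <= v' -> (forall x, u' < x < v' -> 0 <= g x) ->
  RiemannInt pr <= RiemannInt pr'.
Proof.
  intros h1 h2 h3 Hg.
  assert (p1 : Riemann_integrable g u' u) by (apply (RiemannInt_P22 pr'); lra).
  assert (p2 : Riemann_integrable g u v') by (apply (RiemannInt_P23 pr'); lra).
  assert (p3 : Riemann_integrable g v v') by (apply (RiemannInt_P23 p2); lra).
  rewrite <- (RiemannInt_P25 p1 p2 pr') by lra.
  rewrite <- (RiemannInt_P25 pr p3 p2) by lra.
  assert (0 <= RiemannInt p1) by (apply RI_nonneg; [lra| intros; apply Hg; lra]).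
  assert (0 <= RiemannInt p3) by (apply RI_nonneg; [lra| intros; apply Hg; lra]).
  lra.
Qed.

Lemma RI_lin f g k a b (pf : Riemann_integrable f a b) (pg : Riemann_integrable g a b)
  (pr : Riemann_integrable (fun x => f x + k * g x) a b) :
  RiemannInt pr = RiemannInt pf + k * RiemannInt pg.
Proof. apply RiemannInt_P13. Qed.

Lemma ip_RI f l u v : int_pos f l -> 0 < u -> u <= v -> Riemann_integrable f u v.
Proof. intros [H _] hu huv. exact (of_inh (H u v hu huv)). Qed.

Lemma ip_ext f g l : (forall z, f z = g z) -> int_pos f l -> int_pos g l.
Proof. intros H I. replace g with f; auto. apply functional_extensionality; auto. Qed.

Lemma ip_lin f g k l1 l2 : int_pos f l1 -> int_pos g l2 ->
  int_pos (fun z => f z + k * g z) (l1 + k * l2).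
Proof.
  intros If Ig. split.
  - intros u v hu huv. constructor. apply RiemannInt_P10; [apply (ip_RI f l1) | apply (ip_RI g l2)]; auto.
  - intros eps heps. set (e := eps / (2 * (1 + Rabs k))).
    assert (he : 0 < e). { unfold e. apply Rdiv_lt_0_compat; auto. pose proof (Rabs_pos k); lra. }
    destruct (proj2 If e he) as [d1 [hd1 [B1 H1]]].
    destruct (proj2 Ig e he) as [d2 [hd2 [B2 H2]]].
    exists (Rmin d1 d2). split. apply Rmin_pos; auto. exists (Rmax B1 B2).
    intros u v pr hu hud hBv huv.
    assert (pf := ip_RI f l1 u v If hu huv). assert (pg := ip_RI g l2 u v Ig hu huv).
    rewrite (RI_lin f g k u v pf pg pr).
    assert (A1 := H1 u v pf hu (Rlt_le_trans _ _ _ hud (Rmin_l _ _)) (Rle_lt_trans _ _ _ (Rmax_l _ _) hBv) huv).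
    assert (A2 := H2 u v pg hu (Rlt_le_trans _ _ _ hud (Rmin_r _ _)) (Rle_lt_trans _ _ _ (Rmax_r _ _) hBv) huv).
    replace (RiemannInt pf + k * RiemannInt pg - (l1 + k * l2)) with
      ((RiemannInt pf - l1) + k * (RiemannInt pg - l2)) by ring.
    eapply Rle_lt_trans. apply Rabs_triang. rewrite Rabs_mult.
    assert (Rabs k * Rabs (RiemannInt pg - l2) <= Rabs k * e) by (apply Rmult_le_compat_l; [apply Rabs_pos|lra]).
    assert (e * (2 * (1 + Rabs k)) = eps) by (unfold e; field; pose proof (Rabs_pos k); lra).
    pose proof (Rabs_pos k). nra.
Qed.

Lemma ip_bound g L u v (pr : Riemann_integrable g u v) : int_pos g L ->
  (forall z, 0 < z -> 0 <= g z) -> 0 < u -> u <= v -> RiemannInt pr <= L.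
Proof.
  intros Ig Hg hu huv. apply Rnot_lt_le. intro N.
  destruct (proj2 Ig (RiemannInt pr - L)) as [d [hd [B H]]]; [lra|].
  set (u' := Rmin u (d/2)). set (v' := Rmax v (B+1)).
  assert (hu' : 0 < u') by (apply Rmin_pos; lra).
  assert (u' <= u) by apply Rmin_l. assert (u' < d) by (unfold u'; pose proof (Rmin_r u (d/2)); lra).
  assert (v <= v') by apply Rmax_l. assert (B < v') by (unfold v'; pose proof (Rmax_r v (B+1)); lra).
  assert (pr' := ip_RI g L u' v' Ig hu' ltac:(lra)).
  assert (A := H u' v' pr' hu' ltac:(lra) ltac:(lra) ltac:(lra)).
  assert (RiemannInt pr <= RiemannInt pr') by (apply mono_dom; try lra; intros; apply Hg; lra).
  apply Rabs_def2 in A. lra.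
Qed.

Lemma ip_dom_nonneg f g L :
  (forall u v, 0 < u -> u <= v -> inhabited (Riemann_integrable f u v)) ->
  (forall z, 0 < z -> 0 <= f z <= g z) -> int_pos g L -> exists l, int_pos f l.
Proof.
  intros If Hfg Ig.
  set (E := fun x => exists u v (pr : Riemann_integrable f u v), 0 < u /\ u <= v /\ x = RiemannInt pr).
  assert (bE : bound E).
  { exists L. intros x [u [v [pr [hu [huv ->]]]]].
    assert (pg := ip_RI g L u v Ig hu huv).
    apply Rle_trans with (RiemannInt pg).
    - apply RiemannInt_P19; auto. intros zz hz; specialize (Hfg zz ltac:(lra)); lra.
    - apply (ip_bound g L u v pg Ig); auto. intros zz hz; specialize (Hfg zz ltac:(lra)); lra. }
  assert (nE : exists x, E x).
  { exists (RiemannInt (of_inh (If 1 1 ltac:(lra) ltac:(lra)))). exists 1, 1, (of_inh (If 1 1 ltac:(lra) ltac:(lra))). split; [lra|split;[lra|reflexivity]]. }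
  destruct (completeness E bE nE) as [l [Hl1 Hl2]].
  exists l. split; auto.
  intros eps heps.
  assert (exists x, E x /\ l - eps < x).
  { apply NNPP. intro N. assert (is_upper_bound E (l - eps)).
    { intros x Ex. apply Rnot_lt_le. intro h. apply N. exists x; auto. }
    apply Hl2 in H. lra. }
  destruct H as [x [[u0 [v0 [pr0 [hu0 [huv0 ->]]]]] Hx]].
  exists u0. split; auto. exists v0.
  intros u v pr hu hud hBv huv.
  assert (RiemannInt pr0 <= RiemannInt pr) by (apply mono_dom; try lra; intros zz hz; specialize (Hfg zz ltac:(lra)); lra).
  assert (RiemannInt pr <= l) by (apply Hl1; exists u, v, pr; auto).
  apply Rabs_def1; lra.
Qed.

Lemma ip_dom f g L :
  (forall u v, 0 < u -> u <= v -> inhabited (Riemann_integrable f u v)) ->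
  (forall z, 0 < z -> Rabs (f z) <= g z) -> int_pos g L -> exists l, int_pos f l.
Proof.
  intros If Hfg Ig.
  destruct (ip_dom_nonneg (fun z => f z + 1 * g z) (fun z => 2 * g z) (2 * L)) as [l1 Hl1].
  - intros u v hu huv. constructor. apply RiemannInt_P10. exact (of_inh (If u v hu huv)). apply (ip_RI g L); auto.
  - intros z hz. specialize (Hfg z hz). pose proof (Rabs_pos (f z)). destruct (Rcase_abs (f z)); [rewrite Rabs_left in Hfg|rewrite Rabs_right in Hfg]; lra.
  - apply ip_ext with (f := fun z => 0 + 2 * g z). intros; ring.
    replace (2 * L) with (0 + 2 * L) by ring. apply ip_lin; auto.
    split. intros; constructor; apply RiemannInt_P14.
    intros eps he. exists 1. split. lra. exists 0. intros u v pr _ _ _ huv.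
    assert (RiemannInt pr = 0). { rewrite (RiemannInt_P18 pr (RiemannInt_P14 u v 0)); auto.
      rewrite RiemannInt_P15; ring. }
    rewrite H. rewrite Rminus_0_r, Rabs_R0. lra.
  - exists (l1 + (-1) * L). apply ip_ext with (f := fun z => (f z + 1 * g z) + (-1) * g z).
    intros; ring. apply ip_lin; auto.
Qed.

Lemma ip_le0 F G lF : int_pos F lF -> int_pos G 0 ->
  (exists R0, forall u v (pF : Riemann_integrable F u v) (pG : Riemann_integrable G u v),
      0 < u -> u <= v -> R0 <= v -> exists c, 0 <= c <= 1 /\ RiemannInt pF <= c * RiemannInt pG) ->
  lF <= 0.
Proof.
  intros IF IG [R0 K]. apply Rnot_lt_le. intro N.
  destruct (proj2 IF (lF/2)) as [d1 [hd1 [B1 H1]]]; [lra|].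
  destruct (proj2 IG (lF/2)) as [d2 [hd2 [B2 H2]]]; [lra|].
  set (u := Rmin d1 d2 / 2). set (v := Rmax (Rmax B1 B2) (Rmax R0 u) + 1).
  assert (hu : 0 < u) by (unfold u; pose proof (Rmin_pos d1 d2 hd1 hd2); lra).
  assert (u < d1) by (unfold u; pose proof (Rmin_l d1 d2); pose proof (Rmin_pos d1 d2 hd1 hd2); lra).
  assert (u < d2) by (unfold u; pose proof (Rmin_r d1 d2); pose proof (Rmin_pos d1 d2 hd1 hd2); lra).
  assert (B1 < v /\ B2 < v /\ R0 <= v /\ u <= v).
  { unfold v. pose proof (Rmax_l (Rmax B1 B2) (Rmax R0 u)). pose proof (Rmax_r (Rmax B1 B2) (Rmax R0 u)).
    pose proof (Rmax_l B1 B2). pose proof (Rmax_r B1 B2). pose proof (Rmax_l R0 u). pose proof (Rmax_r R0 u). lra. }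
  destruct H3 as [? [? [? ?]]].
  assert (pF := ip_RI F lF u v IF hu H6). assert (pG := ip_RI G 0 u v IG hu H6).
  destruct (K u v pF pG hu H6 H5) as [c [Hc HK]].
  assert (A1 := H1 u v pF hu H H3 H6). assert (A2 := H2 u v pG hu H0 H4 H6).
  apply Rabs_def2 in A1. apply Rabs_def2 in A2. nra.
Qed.

Lemma iR_RI f l u v : int_R f l -> u <= v -> Riemann_integrable f u v.
Proof. intros [H _] huv. exact (of_inh (H u v huv)). Qed.

Lemma iR_ext f g l : (forall z, f z = g z) -> int_R f l -> int_R g l.
Proof. intros H I. replace g with f; auto. apply functional_extensionality; auto. Qed.

Lemma iR_lin f g k l1 l2 : int_R f l1 -> int_R g l2 ->
  int_R (fun z => f z + k * g z) (l1 + k * l2).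
Proof.
  intros If Ig. split.
  - intros u v huv. constructor. apply RiemannInt_P10; [apply (iR_RI f l1) | apply (iR_RI g l2)]; auto.
  - intros eps heps. set (e := eps / (2 * (1 + Rabs k))).
    assert (he : 0 < e). { unfold e. apply Rdiv_lt_0_compat; auto. pose proof (Rabs_pos k); lra. }
    destruct (proj2 If e he) as [A1 H1].
    destruct (proj2 Ig e he) as [A2 H2].
    exists (Rmax A1 A2).
    intros u v pr hu hv huv.
    assert (pf := iR_RI f l1 u v If huv). assert (pg := iR_RI g l2 u v Ig huv).
    rewrite (RI_lin f g k u v pf pg pr).
    pose proof (Rmax_l A1 A2). pose proof (Rmax_r A1 A2).
    assert (B1 := H1 u v pf ltac:(lra) ltac:(lra) huv).
    assert (B2 := H2 u v pg ltac:(lra) ltac:(lra) huv).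
    replace (RiemannInt pf + k * RiemannInt pg - (l1 + k * l2)) with
      ((RiemannInt pf - l1) + k * (RiemannInt pg - l2)) by ring.
    eapply Rle_lt_trans. apply Rabs_triang. rewrite Rabs_mult.
    assert (Rabs k * Rabs (RiemannInt pg - l2) <= Rabs k * e) by (apply Rmult_le_compat_l; [apply Rabs_pos|lra]).
    assert (e * (2 * (1 + Rabs k)) = eps) by (unfold e; field; pose proof (Rabs_pos k); lra).
    pose proof (Rabs_pos k). nra.
Qed.

Lemma iR_bound g L u v (pr : Riemann_integrable g u v) : int_R g L ->
  (forall z, 0 <= g z) -> u <= v -> RiemannInt pr <= L.
Proof.
  intros Ig Hg huv. apply Rnot_lt_le. intro N.
  destruct (proj2 Ig (RiemannInt pr - L)) as [A H]; [lra|].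
  set (u' := Rmin u (-A - 1)). set (v' := Rmax v (A+1)).
  assert (u' <= u) by apply Rmin_l. assert (u' < -A) by (unfold u'; pose proof (Rmin_r u (-A-1)); lra).
  assert (v <= v') by apply Rmax_l. assert (A < v') by (unfold v'; pose proof (Rmax_r v (A+1)); lra).
  assert (pr' := iR_RI g L u' v' Ig ltac:(lra)).
  assert (B := H u' v' pr' ltac:(lra) ltac:(lra) ltac:(lra)).
  assert (RiemannInt pr <= RiemannInt pr') by (apply mono_dom; try lra; intros; apply Hg).
  apply Rabs_def2 in B. lra.
Qed.

Lemma iR_dom_nonneg f g L :
  (forall u v, u <= v -> inhabited (Riemann_integrable f u v)) ->
  (forall z, 0 <= f z <= g z) -> int_R g L -> exists l, int_R f l.
Proof.
  intros If Hfg Ig.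
  set (E := fun x => exists u v (pr : Riemann_integrable f u v), u <= v /\ x = RiemannInt pr).
  assert (bE : bound E).
  { exists L. intros x [u [v [pr [huv ->]]]].
    assert (pg := iR_RI g L u v Ig huv).
    apply Rle_trans with (RiemannInt pg).
    - apply RiemannInt_P19; auto. intros zz hz; specialize (Hfg zz); lra.
    - apply (iR_bound g L u v pg Ig); auto. intros zz; specialize (Hfg zz); lra. }
  assert (nE : exists x, E x).
  { exists (RiemannInt (of_inh (If 1 1 ltac:(lra)))). exists 1, 1, (of_inh (If 1 1 ltac:(lra))). split; [lra|reflexivity]. }
  destruct (completeness E bE nE) as [l [Hl1 Hl2]].
  exists l. split; auto.
  intros eps heps.
  assert (exists x, E x /\ l - eps < x).
  { apply NNPP. intro N. assert (is_upper_bound E (l - eps)).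
    { intros x Ex. apply Rnot_lt_le. intro h. apply N. exists x; auto. }
    apply Hl2 in H. lra. }
  destruct H as [x [[u0 [v0 [pr0 [huv0 ->]]]] Hx]].
  exists (Rmax (Rabs u0) (Rabs v0)).
  intros u v pr hu hv huv.
  pose proof (Rmax_l (Rabs u0) (Rabs v0)). pose proof (Rmax_r (Rabs u0) (Rabs v0)).
  pose proof (Rle_abs v0). pose proof (Rle_abs (-u0)). rewrite Rabs_Ropp in H2.
  assert (RiemannInt pr0 <= RiemannInt pr) by (apply mono_dom; try lra; intros zz hz; specialize (Hfg zz); lra).
  assert (RiemannInt pr <= l) by (apply Hl1; exists u, v, pr; auto).
  apply Rabs_def1; lra.
Qed.

Lemma iR_dom f g L :
  (forall u v, u <= v -> inhabited (Riemann_integrable f u v)) ->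
  (forall z, Rabs (f z) <= g z) -> int_R g L -> exists l, int_R f l.
Proof.
  intros If Hfg Ig.
  destruct (iR_dom_nonneg (fun z => f z + 1 * g z) (fun z => 2 * g z) (2 * L)) as [l1 Hl1].
  - intros u v huv. constructor. apply RiemannInt_P10. exact (of_inh (If u v huv)). apply (iR_RI g L); auto.
  - intros z. specialize (Hfg z). pose proof (Rabs_pos (f z)). destruct (Rcase_abs (f z)); [rewrite Rabs_left in Hfg|rewrite Rabs_right in Hfg]; lra.
  - apply iR_ext with (f := fun z => 0 + 2 * g z). intros; ring.
    replace (2 * L) with (0 + 2 * L) by ring. apply iR_lin; auto.
    split. intros; constructor; apply RiemannInt_P14.
    intros eps he. exists 0. intros u v pr _ _ huv.
    assert (RiemannInt pr = 0). { rewrite (RiemannInt_P18 pr (RiemannInt_P14 u v 0)); auto.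
      rewrite RiemannInt_P15; ring. }
    rewrite H. rewrite Rminus_0_r, Rabs_R0. lra.
  - exists (l1 + (-1) * L). apply iR_ext with (f := fun z => (f z + 1 * g z) + (-1) * g z).
    intros; ring. apply iR_lin; auto.
Qed.

Lemma iR_le0 F G lF : int_R F lF -> int_R G 0 ->
  (exists R0, forall u v (pF : Riemann_integrable F u v) (pG : Riemann_integrable G u v),
      u <= v -> R0 <= v -> exists c, 0 <= c <= 1 /\ RiemannInt pF <= c * RiemannInt pG) ->
  lF <= 0.
Proof.
  intros IF IG [R0 K]. apply Rnot_lt_le. intro N.
  destruct (proj2 IF (lF/2)) as [A1 H1]; [lra|].
  destruct (proj2 IG (lF/2)) as [A2 H2]; [lra|].
  set (M := Rmax (Rmax (Rabs A1) (Rabs A2)) (Rabs R0) + 1).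
  assert (Rabs A1 < M /\ Rabs A2 < M /\ Rabs R0 < M).
  { unfold M. pose proof (Rmax_l (Rmax (Rabs A1) (Rabs A2)) (Rabs R0)). pose proof (Rmax_r (Rmax (Rabs A1) (Rabs A2)) (Rabs R0)).
    pose proof (Rmax_l (Rabs A1) (Rabs A2)). pose proof (Rmax_r (Rabs A1) (Rabs A2)). lra. }
  destruct H as [? [? ?]].
  pose proof (Rle_abs A1). pose proof (Rle_abs A2). pose proof (Rle_abs R0). pose proof (Rabs_pos A1).
  assert (pF := iR_RI F lF (-M) M IF ltac:(lra)). assert (pG := iR_RI G 0 (-M) M IG ltac:(lra)).
  destruct (K (-M) M pF pG ltac:(lra) ltac:(lra)) as [c [Hc HK]].
  assert (B1 := H1 (-M) M pF ltac:(lra) ltac:(lra) ltac:(lra)). assert (B2 := H2 (-M) M pG ltac:(lra) ltac:(lra) ltac:(lra)).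
  apply Rabs_def2 in B1. apply Rabs_def2 in B2. nra.
Qed.

Lemma abs_sub_le x m : Rabs (x - m) <= Rabs x + Rabs m.
Proof. unfold Rminus. eapply Rle_trans. apply Rabs_triang. rewrite Rabs_Ropp. lra. Qed.

Definition KEYpos p h m := forall a, 0 < a -> exists R0, forall u v
  (pF : Riemann_integrable (fun z => T a (h z - m) * p z) u v)
  (pG : Riemann_integrable (fun z => (h z - m) * p z) u v),
  0 < u -> u <= v -> R0 <= v -> exists c, 0 <= c <= 1 /\ RiemannInt pF <= c * RiemannInt pG.

Definition KEYR p h m := forall a, 0 < a -> exists R0, forall u v
  (pF : Riemann_integrable (fun z => T a (h z - m) * p z) u v)
  (pG : Riemann_integrable (fun z => (h z - m) * p z) u v),
  u <= v -> R0 <= v -> exists c, 0 <= c <= 1 /\ RiemannInt pF <= c * RiemannInt pG.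

Lemma heavy_pos p h m :
  (forall z, 0 < z -> continuity_pt p z /\ continuity_pt h z) ->
  (forall z, 0 < z -> 0 <= p z) ->
  int_pos p 1 -> expect_pos p h (fun y => y) m -> KEYpos p h m ->
  heavy_on_left (expect_pos p (fun z => h z - m)).
Proof.
  intros Cph Pp Ip [[L IL] Ih] K.
  assert (RIc : forall f, (forall z, 0 < z -> continuity_pt f z) ->
     forall u v, 0 < u -> u <= v -> inhabited (Riemann_integrable f u v)).
  { intros f Cf u v hu huv. constructor. apply continuity_implies_RiemannInt; auto. intros; apply Cf; lra. }
  set (D := fun z => Rabs (h z) * p z + Rabs m * p z).
  assert (ID : int_pos D (L + Rabs m * 1)) by (apply ip_lin; auto).
  assert (Dbound : forall z, 0 < z -> Rabs (h z - m) * p z <= D z).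
  { intros z hz. unfold D. pose proof (abs_sub_le (h z) m). pose proof (Pp z hz). nra. }
  assert (CX : forall z, 0 < z -> continuity_pt (fun z => h z - m) z).
  { intros z hz. apply C_minus. apply Cph; auto. apply C_const. }
  split.
  - split.
    + apply (ip_dom _ D (L + Rabs m * 1)); auto.
      * apply RIc. intros z hz. apply C_mult. apply C_comp. apply CX; auto. apply C_abs. apply Cph; auto.
      * intros z hz. rewrite Rabs_mult, Rabs_Rabsolu, (Rabs_right (p z)) by (apply Rle_ge, Pp; auto). apply Dbound; auto.
    + apply ip_ext with (f := fun z => h z * p z + (- m) * p z). intros; simpl; ring.
      replace 0 with (m + (-m) * 1) by ring. apply ip_lin; auto.
  - intros a ha.
    assert (CF : forall z, 0 < z -> continuity_pt (fun z => T a (h z - m) * p z) z).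
    { intros z hz. apply C_mult. apply C_comp. apply CX; auto. apply T_cont; auto. apply Cph; auto. }
    assert (FB : forall z, 0 < z -> Rabs (T a (h z - m) * p z) <= D z).
    { intros z hz. rewrite Rabs_mult, (Rabs_right (p z)) by (apply Rle_ge, Pp; auto).
      eapply Rle_trans; [|apply Dbound; auto]. apply Rmult_le_compat_r. apply Pp; auto. apply T_abs; auto. }
    destruct (ip_dom _ D _ (RIc _ CF) FB ID) as [l Hl].
    exists l. split; [split|].
    + apply (ip_dom _ D (L + Rabs m * 1)); auto.
      * apply RIc. intros z hz. apply C_mult. apply C_comp. apply C_comp. apply CX; auto. apply T_cont; auto. apply C_abs. apply Cph; auto.
      * intros z hz. rewrite Rabs_mult, Rabs_Rabsolu, (Rabs_right (p z)) by (apply Rle_ge, Pp; auto).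
        rewrite <- (Rabs_right (p z)) by (apply Rle_ge, Pp; auto). rewrite <- Rabs_mult. apply FB; auto.
    + exact Hl.
    + apply (ip_le0 _ (fun z => (h z - m) * p z) l Hl).
      * apply ip_ext with (f := fun z => h z * p z + (- m) * p z). intros; simpl; ring.
        replace 0 with (m + (-m) * 1) by ring. apply ip_lin; auto.
      * apply K; auto.
Qed.

Lemma heavy_R p h m :
  (forall z, continuity_pt p z /\ continuity_pt h z) ->
  (forall z, 0 <= p z) ->
  int_R p 1 -> expect_R p h (fun y => y) m -> KEYR p h m ->
  heavy_on_left (expect_R p (fun z => h z - m)).
Proof.
  intros Cph Pp Ip [[L IL] Ih] K.
  assert (RIc : forall f, (forall z, continuity_pt f z) ->
     forall u v, u <= v -> inhabited (Riemann_integrable f u v)).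
  { intros f Cf u v huv. constructor. apply continuity_implies_RiemannInt; auto. }
  set (D := fun z => Rabs (h z) * p z + Rabs m * p z).
  assert (ID : int_R D (L + Rabs m * 1)) by (apply iR_lin; auto).
  assert (Dbound : forall z, Rabs (h z - m) * p z <= D z).
  { intros z. unfold D. pose proof (abs_sub_le (h z) m). pose proof (Pp z). nra. }
  assert (CX : forall z, continuity_pt (fun z => h z - m) z).
  { intros z. apply C_minus. apply Cph; auto. apply C_const. }
  split.
  - split.
    + apply (iR_dom _ D (L + Rabs m * 1)); auto.
      * apply RIc. intros z. apply C_mult. apply C_comp. apply CX; auto. apply C_abs. apply Cph; auto.
      * intros z. rewrite Rabs_mult, Rabs_Rabsolu, (Rabs_right (p z)) by (apply Rle_ge, Pp; auto). apply Dbound; auto.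
    + apply iR_ext with (f := fun z => h z * p z + (- m) * p z). intros; simpl; ring.
      replace 0 with (m + (-m) * 1) by ring. apply iR_lin; auto.
  - intros a ha.
    assert (CF : forall z, continuity_pt (fun z => T a (h z - m) * p z) z).
    { intros z. apply C_mult. apply C_comp. apply CX; auto. apply T_cont; auto. apply Cph; auto. }
    assert (FB : forall z, Rabs (T a (h z - m) * p z) <= D z).
    { intros z. rewrite Rabs_mult, (Rabs_right (p z)) by (apply Rle_ge, Pp; auto).
      eapply Rle_trans; [|apply Dbound; auto]. apply Rmult_le_compat_r. apply Pp; auto. apply T_abs; auto. }
    destruct (iR_dom _ D _ (RIc _ CF) FB ID) as [l Hl].
    exists l. split; [split|].
    + apply (iR_dom _ D (L + Rabs m * 1)); auto.
      * apply RIc. intros z. apply C_mult. apply C_comp. apply C_comp. apply CX; auto. apply T_cont; auto. apply C_abs. apply Cph; auto.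
      * intros z. rewrite Rabs_mult, Rabs_Rabsolu, (Rabs_right (p z)) by (apply Rle_ge, Pp; auto).
        rewrite <- (Rabs_right (p z)) by (apply Rle_ge, Pp; auto). rewrite <- Rabs_mult. apply FB; auto.
    + exact Hl.
    + apply (iR_le0 _ (fun z => (h z - m) * p z) l Hl).
      * apply iR_ext with (f := fun z => h z * p z + (- m) * p z). intros; simpl; ring.
        replace 0 with (m + (-m) * 1) by ring. apply iR_lin; auto.
      * apply K; auto.
Qed.

Lemma key_trivial p h m a u v
  (pF : Riemann_integrable (fun z => T a (h z - m) * p z) u v)
  (pG : Riemann_integrable (fun z => (h z - m) * p z) u v) :
  0 < a -> u <= v -> (forall z, u <= z <= v -> m <= h z /\ 0 <= p z) ->
  exists c, 0 <= c <= 1 /\ RiemannInt pF <= c * RiemannInt pG.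
Proof.
  intros ha huv H. exists 1. split; [lra|]. rewrite Rmult_1_l.
  apply RiemannInt_P19; auto. intros z hz. destruct (H z ltac:(lra)).
  assert (T a (h z - m) - (h z - m) <= 0) by (apply T_pos_le; lra). nra.
Qed.

Lemma key_struct p h m a u v s l r l' r'
  (pF : Riemann_integrable (fun z => T a (h z - m) * p z) u v)
  (pG : Riemann_integrable (fun z => (h z - m) * p z) u v) :
  0 < a -> 0 <= s -> l 0 = r 0 -> l s = u -> r s <= v ->
  (forall t, 0 <= t <= s -> u <= l t <= r s /\ u <= r t <= r s) ->
  (forall t, 0 <= t <= s -> derivable_pt_lim l t (l' t) /\ derivable_pt_lim r t (r' t)) ->
  (forall t, 0 <= t <= s -> h (l t) = m - t /\ h (r t) = m + t) ->
  (forall z, u <= z <= v -> continuity_pt p z /\ continuity_pt h z /\ 0 <= p z) ->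
  (forall z, r s <= z <= v -> s <= h z - m) ->
  (forall t1 t2, 0 <= t1 -> t1 <= t2 -> t2 <= s ->
     - (p (r t2) * r' t2 + p (l t2) * l' t2) > 0 -> - (p (r t1) * r' t1 + p (l t1) * l' t1) >= 0) ->
  exists c, 0 <= c <= 1 /\ RiemannInt pF <= c * RiemannInt pG.
Proof.
  intros ha hs h0 hls hrs Rg Dv Hh Cp Hrs Cr.
  destruct (choose_c a (fun t => - (p (r t) * r' t + p (l t) * l' t)) s ha hs Cr) as [c [Hc [S1 S2]]].
  exists c. split; auto.
  assert (huv : u <= v) by (destruct (Rg s) as [_ [? ?]]; lra).
  set (k := fun z => T a (h z - m) * p z + (- c) * ((h z - m) * p z)).
  assert (pk : Riemann_integrable k u v) by (apply RiemannInt_P10; auto).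
  assert (EE : RiemannInt pk = RiemannInt pF + - c * RiemannInt pG) by apply RiemannInt_P13.
  assert (RiemannInt pk <= 0); [|lra].
  apply (pairing k l r l' r' u v s pk); auto.
  - intros z hz. destruct (Cp z hz) as [C1 [C2 _]]. unfold k.
    assert (CX : continuity_pt (fun z => h z - m) z) by (apply C_minus; auto; apply C_const).
    apply C_plus. apply C_mult; auto. apply C_comp; auto. apply T_cont; auto.
    apply C_mult. apply C_const. apply C_mult; auto.
  - intros t ht. destruct (Hh t ht) as [E1 E2]. unfold k. rewrite E1, E2.
    replace (m - t - m) with (- t) by ring. replace (m + t - m) with t by ring.
    rewrite T_odd by auto. specialize (S1 t ht). simpl in S1.
    replace ((T a t * p (r t) + - c * (t * p (r t))) * r' t - (- T a t * p (l t) + - c * (- t * p (l t))) * l' t)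
      with (- ((T a t - c * t) * - (p (r t) * r' t + p (l t) * l' t))) by ring.
    lra.
  - intros z hz. unfold k. specialize (Hrs z hz). destruct (Cp z ltac:(destruct (Rg s) as [_ [? ?]]; lra)) as [_ [_ P]].
    assert (T a (h z - m) - c * (h z - m) <= 0) by (apply S2; lra). nra.
Qed.

Lemma gd_eq C a lam y : gamma_density C a lam y = C * exp ((a - 1) * ln y + - lam * y).
Proof. unfold gamma_density, Rpower. rewrite exp_plus. ring. Qed.

Lemma gd_cont C a lam z : 0 < z -> continuity_pt (gamma_density C a lam) z.
Proof.
  intros hz. apply C_ext with (f := fun y => C * exp ((a - 1) * ln y + - lam * y)).
  intros; rewrite gd_eq; auto.
  apply C_mult. apply C_const. apply C_of_D with (l := exp ((a - 1) * ln z + - lam * z) * ((a-1) * / z + - lam)).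
  dauto; try reflexivity; auto. simpl; ring.
Qed.

Lemma gd_pos C a lam z : 0 < C -> 0 < gamma_density C a lam z.
Proof. intros hC. rewrite gd_eq. apply Rmult_lt_0_compat; auto. apply exp_pos. Qed.

Section Gam.
Variables (C a lam m : R).
Hypotheses (hC : 0 < C) (hlam : 0 < lam).

Definition gg t := (a - 1) * (ln (m - t) - ln (m + t)) + 2 * lam * t.

Lemma w_gg t : 0 <= t < m ->
  (gamma_density C a lam (m - t) - gamma_density C a lam (m + t) > 0 <-> gg t > 0) /\
  (gamma_density C a lam (m - t) - gamma_density C a lam (m + t) >= 0 <-> gg t >= 0).
Proof.
  intros ht. rewrite !gd_eq. unfold gg.
  set (e1 := (a - 1) * ln (m - t) + - lam * (m - t)).
  set (e2 := (a - 1) * ln (m + t) + - lam * (m + t)).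
  replace ((a - 1) * (ln (m - t) - ln (m + t)) + 2 * lam * t) with (e1 - e2) by (unfold e1, e2; ring).
  split; split; intro H.
  - assert (exp e2 < exp e1) by nra. apply exp_lt_inv in H0. lra.
  - assert (exp e2 < exp e1) by (apply exp_increasing; lra). nra.
  - destruct (Rle_dec e2 e1); [lra|]. assert (exp e1 < exp e2) by (apply exp_increasing; lra). nra.
  - destruct (Req_dec e1 e2) as [E|E]. rewrite E; lra.
    assert (exp e2 < exp e1) by (apply exp_increasing; lra). nra.
Qed.

Lemma gg_deriv t : 0 <= t < m -> derivable_pt_lim gg t ((a - 1) * (- / (m - t) - / (m + t)) + 2 * lam).
Proof.
  intros ht. unfold gg.
  dauto; try reflexivity; try lra. all: simpl; field; lra.
Qed.

Lemma gg_cross t1 t2 : 0 <= t1 -> t1 <= t2 -> t2 < m -> gg t2 > 0 -> gg t1 >= 0.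
Proof.
  intros h1 h12 h2 g2.
  assert (g0 : gg 0 = 0) by (unfold gg; rewrite Rminus_0_r, Rplus_0_r; ring).
  destruct (Rle_dec a 1) as [ha|ha].
  - unfold gg. assert (ln (m - t1) <= ln (m + t1)).
    { destruct (Req_dec t1 0). subst; rewrite Rminus_0_r, Rplus_0_r; lra. left; apply ln_increasing; lra. }
    nra.
  - apply Rnot_lt_ge. intro g1.
    assert (t1 <> 0) by (intro; subst; lra).
    set (gd := fun t => (a - 1) * (- / (m - t) - / (m + t)) + 2 * lam).
    destruct (MVT_cor2 gg gd 0 t1) as [x1 [E1 H1]]. lra. intros; apply gg_deriv; lra.
    destruct (MVT_cor2 gg gd t1 t2) as [x2 [E2 H2]]. destruct (Req_dec t1 t2); [subst; lra| lra].
      intros; apply gg_deriv; lra.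
    assert (gd x1 < 0). { rewrite g0 in E1. assert (gd x1 * (t1 - 0) < 0) by lra. nra. }
    assert (gd x2 > 0). { assert (gd x2 * (t2 - t1) > 0) by lra. nra. }
    assert (gd x2 <= gd x1); [|lra].
    assert (hx: 0 <= x1 < x2 /\ x2 < m) by lra.
    assert (K : / (m - x1) + / (m + x1) <= / (m - x2) + / (m + x2)).
    { replace (/ (m - x1) + / (m + x1)) with (2 * m * / ((m - x1) * (m + x1))) by (field; lra).
      replace (/ (m - x2) + / (m + x2)) with (2 * m * / ((m - x2) * (m + x2))) by (field; lra).
      apply Rmult_le_compat_l. lra. apply Rinv_le_contravar. nra. nra. }
    unfold gd. nra.
Qed.
End Gam.

Lemma part1 : forall a lam C m : R, 0 < a -> 0 < lam -> 0 < C ->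
     int_pos (gamma_density C a lam) 1 ->
     expect_pos (gamma_density C a lam) (fun y => y) (fun y => y) m ->
     heavy_on_left (expect_pos (gamma_density C a lam) (fun y => y - m)).
Proof.
  intros a lam C m ha hlam hC I1 Em.
  apply (heavy_pos _ (fun y => y)); auto.
  - intros z hz. split. apply gd_cont; auto. apply C_id.
  - intros z hz. left; apply gd_pos; auto.
  - intros b hb. exists (2 * m). intros u v pF pG hu huv hv.
    destruct (Rle_dec m u) as [hmu|hmu].
    + apply key_trivial; auto. intros z hz. split. lra. left; apply gd_pos; auto.
    + apply (key_struct _ (fun y => y) m b u v (m - u) (fun t => m - t) (fun t => m + t) (fun _ => -1) (fun _ => 1)); auto.
      * lra.
      * ring.
      * ring.
      * lra.
      * intros t ht; lra.
      * intros t ht. split; dauto; try reflexivity; simpl; ring.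
      * intros z hz. split. apply gd_cont; lra. split. apply C_id. left; apply gd_pos; auto.
      * intros z hz. simpl in hz. lra.
      * intros t1 t2 h1 h12 h2.
        replace (- (gamma_density C a lam (m + t2) * 1 + gamma_density C a lam (m - t2) * -1))
          with (gamma_density C a lam (m - t2) - gamma_density C a lam (m + t2)) by ring.
        replace (- (gamma_density C a lam (m + t1) * 1 + gamma_density C a lam (m - t1) * -1))
          with (gamma_density C a lam (m - t1) - gamma_density C a lam (m + t1)) by ring.
        intro H. apply (w_gg C a lam m hC t1 ltac:(lra)). apply (w_gg C a lam m hC t2 ltac:(lra)) in H.
        apply (gg_cross a lam m hlam t1 t2); auto; lra.
Qed.

Lemma ln_le' x y : 0 < x -> x <= y -> ln x <= ln y.
Proof. intros. destruct (Req_dec x y). subst; lra. left; apply ln_increasing; lra. Qed.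
Lemma exp_le' x y : x <= y -> exp x <= exp y.
Proof. intros. destruct (Req_dec x y). subst; lra. left; apply exp_increasing; lra. Qed.

Lemma exp_density_int lam : 0 < lam -> int_pos (exp_density lam) 1.
Proof.
  intros hl.
  assert (Cp : forall z, continuity_pt (exp_density lam) z).
  { intros z. unfold exp_density. apply C_of_D with (l := lam * (exp (- lam * z) * (- lam))).
    dauto; try reflexivity. simpl; ring. }
  assert (FT : forall u v (pr : Riemann_integrable (exp_density lam) u v), u <= v ->
           RiemannInt pr = exp (- lam * u) - exp (- lam * v)).
  { intros u v pr huv. rewrite (FTC_gen _ (fun z => - exp (- lam * z)) u v pr huv); [ring| |].
    - intros; apply Cp.
    - intros x hx. unfold exp_density. dauto; try reflexivity. simpl; ring. }
  split.
  - intros u v hu huv. constructor. apply continuity_implies_RiemannInt; auto.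
  - intros eps he. exists (eps / (2 * lam)). split. apply Rdiv_lt_0_compat; lra.
    exists (2 / (lam * eps)). intros u v pr hu hud hBv huv.
    rewrite FT by auto.
    assert (E1 : 1 - lam * u <= exp (- lam * u)) by (pose proof (exp_ineq1_le (- lam * u)); lra).
    assert (E2 : exp (- lam * u) <= 1) by (rewrite <- exp_0; apply exp_le'; nra).
    assert (lam * u < eps / 2).
    { apply Rmult_lt_compat_l with (r := lam) in hud; auto.
      replace (lam * (eps / (2 * lam))) with (eps / 2) in hud by (field; lra). lra. }
    assert (hv : 0 < v) by lra.
    assert (E3 : 0 < exp (- lam * v)) by apply exp_pos.
    assert (E4 : exp (- lam * v) < eps / 2).
    { replace (- lam * v) with (- (lam * v)) by ring. rewrite exp_Ropp.
      assert (1 + lam * v <= exp (lam * v)) by apply exp_ineq1_le.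
      assert (2 / eps < lam * v).
      { apply Rmult_lt_compat_l with (r := lam) in hBv; auto.
        replace (lam * (2 / (lam * eps))) with (2 / eps) in hBv by (field; lra). lra. }
      assert (0 < 2 / eps) by (apply Rdiv_lt_0_compat; lra).
      apply Rlt_le_trans with (/ (2 / eps)). apply Rinv_lt_contravar. nra. lra.
      right; field; lra. }
    apply Rabs_def1; lra.
Qed.

Lemma part2 : forall a lam m : R, 0 < a -> 0 < lam ->
     expect_pos (exp_density lam) (fun z => a * exp z) (fun y => y) m ->
     heavy_on_left (expect_pos (exp_density lam) (fun z => a * exp z - m)).
Proof.
  intros A lam m hA hl Em.
  assert (Cp : forall z, continuity_pt (exp_density lam) z).
  { intros z. unfold exp_density. apply C_of_D with (l := lam * (exp (- lam * z) * (- lam))).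
    dauto; try reflexivity. simpl; ring. }
  assert (Pp : forall z, 0 < exp_density lam z).
  { intros z. unfold exp_density. apply Rmult_lt_0_compat; auto. apply exp_pos. }
  assert (Ch : forall z, continuity_pt (fun z => A * exp z) z).
  { intros z. apply C_of_D with (l := 0 * exp z + A * (exp z * 1)). dauto; try reflexivity. }
  apply (heavy_pos _ (fun z => A * exp z)); auto.
  - intros z hz. left; auto.
  - apply exp_density_int; auto.
  - intros b hb. exists (ln (2 * m / A)). intros u v pF pG hu huv hv.
    destruct (Rle_dec m (A * exp u)) as [hmu|hmu].
    + apply key_trivial; auto. intros z hz. split. 2: left; auto.
      assert (exp u <= exp z) by (apply exp_le'; lra). nra.
    + assert (hm : 0 < m) by (pose proof (exp_pos u); nra).
      assert (hAu : 0 < A * exp u) by (apply Rmult_lt_0_compat; auto; apply exp_pos).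
      set (s := m - A * exp u).
      apply (key_struct _ (fun z => A * exp z) m b u v s (fun t => ln ((m - t) / A)) (fun t => ln ((m + t) / A))
               (fun t => - / (m - t)) (fun t => / (m + t))); auto.
      * unfold s; lra.
      * rewrite Rminus_0_r, Rplus_0_r; auto.
      * unfold s. replace ((m - (m - A * exp u)) / A) with (exp u) by (field; lra). apply ln_exp.
      * eapply Rle_trans; [|exact hv]. apply ln_le'. apply Rdiv_lt_0_compat; unfold s; lra.
        unfold Rdiv. apply Rmult_le_compat_r. left; apply Rinv_0_lt_compat; auto. unfold s; lra.
      * intros t ht. unfold s in ht.
        assert (eu : u = ln ((m - s) / A)).
        { unfold s. replace ((m - (m - A * exp u)) / A) with (exp u) by (field; lra). rewrite ln_exp; auto. }
        rewrite eu. unfold s in *.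
        repeat split; apply ln_le'; try (apply Rdiv_lt_0_compat; lra);
          unfold Rdiv; apply Rmult_le_compat_r; try (left; apply Rinv_0_lt_compat; auto); lra.
      * intros t ht. unfold s in ht. split; dauto; try reflexivity; try (simpl; apply Rdiv_lt_0_compat; lra).
        all: simpl; field; split; lra.
      * intros t ht. unfold s in ht. split; rewrite exp_ln by (apply Rdiv_lt_0_compat; lra); field; lra.
      * intros z hz. repeat split; auto. left; auto.
      * intros z hz. unfold s in *.
        assert (exp (ln ((m + (m - A * exp u)) / A)) <= exp z) by (apply exp_le'; lra).
        rewrite exp_ln in H by (apply Rdiv_lt_0_compat; lra).
        apply Rmult_le_compat_l with (r := A) in H; [|lra].
        replace (A * ((m + (m - A * exp u)) / A)) with (m + (m - A * exp u)) in H by (field; lra). lra.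
      * intros t1 t2 h1 h12 h2 _. unfold s in h2.
        assert (L1 : ln ((m - t1) / A) <= ln ((m + t1) / A)).
        { apply ln_le'. apply Rdiv_lt_0_compat; lra. unfold Rdiv; apply Rmult_le_compat_r. left; apply Rinv_0_lt_compat; auto. lra. }
        unfold exp_density.
        assert (exp (- lam * ln ((m + t1) / A)) <= exp (- lam * ln ((m - t1) / A))) by (apply exp_le'; nra).
        assert (0 < / (m + t1)) by (apply Rinv_0_lt_compat; lra).
        assert (/ (m + t1) <= / (m - t1)) by (apply Rinv_le_contravar; lra).
        pose proof (exp_pos (- lam * ln ((m + t1) / A))).
        assert (lam * exp (- lam * ln ((m + t1) / A)) * / (m + t1) <= lam * exp (- lam * ln ((m - t1) / A)) * / (m - t1)).
        { apply Rmult_le_compat; try nra. }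
        lra.
Qed.

Lemma nd_pos mu s2 z : 0 < s2 -> 0 < normal_density mu s2 z.
Proof.
  intros hs. unfold normal_density. apply Rmult_lt_0_compat. apply Rinv_0_lt_compat.
  apply sqrt_lt_R0. pose proof PI_RGT_0. nra. apply exp_pos.
Qed.

Lemma nd_cont mu s2 z : continuity_pt (normal_density mu s2) z.
Proof.
  unfold normal_density.
  apply C_of_D with (l := 0 * exp (- (z - mu) ^ 2 / (2 * s2)) + / sqrt (2 * PI * s2) *
    (exp (- (z - mu) ^ 2 / (2 * s2)) * (- (INR 2 * (z - mu) ^ 1 * 1) * / (2 * s2)))).
  apply dX with (df := 0) (dg := exp (- (z - mu) ^ 2 / (2 * s2)) * (- (INR 2 * (z - mu) ^ 1 * 1) * / (2 * s2))).
  apply D_const. 2: reflexivity.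
  apply dE with (df := - (INR 2 * (z - mu) ^ 1 * 1) * / (2 * s2)). 2: reflexivity.
  apply dX with (df := - (INR 2 * (z - mu) ^ 1 * 1)) (dg := 0). 3: ring.
  apply dO with (df := INR 2 * (z - mu) ^ 1 * 1). 2: reflexivity.
  apply D_comp with (f := fun y => y - mu) (g := fun y => y ^ 2). 
  apply dM with (df := 1) (dg := 0). apply D_id. apply D_const. ring.
  apply derivable_pt_lim_pow. apply D_const.
Qed.

Section LN.
Variables (mu s2 m : R).
Hypothesis hs : 0 < s2.

Definition qq t := ln (m - t) + ln (m + t) - 2 * mu + 2 * s2.

Lemma ln_w t : 0 <= t < m ->
  normal_density mu s2 (ln (m - t)) * / (m - t) - normal_density mu s2 (ln (m + t)) * / (m + t)
  = / sqrt (2 * PI * s2) * (exp (- (ln (m - t) - mu) ^ 2 / (2 * s2) - ln (m - t))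
                            - exp (- (ln (m + t) - mu) ^ 2 / (2 * s2) - ln (m + t))).
Proof.
  intros ht. unfold normal_density.
  assert (EM : forall x y, exp (x - y) = exp x * / exp y) by (intros; unfold Rminus; rewrite exp_plus, exp_Ropp; auto).
  rewrite !EM, !exp_ln by lra. ring.
Qed.

Lemma ln_diff t : 0 <= t < m ->
  (- (ln (m - t) - mu) ^ 2 / (2 * s2) - ln (m - t)) - (- (ln (m + t) - mu) ^ 2 / (2 * s2) - ln (m + t))
  = (ln (m + t) - ln (m - t)) * qq t / (2 * s2).
Proof. intros ht. unfold qq. field. lra. Qed.

Lemma ln_cross t1 t2 : 0 <= t1 -> t1 <= t2 -> t2 < m ->
  normal_density mu s2 (ln (m - t2)) * / (m - t2) - normal_density mu s2 (ln (m + t2)) * / (m + t2) > 0 ->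
  normal_density mu s2 (ln (m - t1)) * / (m - t1) - normal_density mu s2 (ln (m + t1)) * / (m + t1) >= 0.
Proof.
  intros h1 h12 h2. rewrite !ln_w by lra.
  assert (K : 0 < / sqrt (2 * PI * s2)). { apply Rinv_0_lt_compat. apply sqrt_lt_R0. pose proof PI_RGT_0. nra. }
  intros H.
  set (e1 t := - (ln (m - t) - mu) ^ 2 / (2 * s2) - ln (m - t)).
  set (e2 t := - (ln (m + t) - mu) ^ 2 / (2 * s2) - ln (m + t)).
  fold (e1 t2) (e2 t2) in H. fold (e1 t1) (e2 t1).
  assert (A2 : e2 t2 < e1 t2).
  { apply exp_lt_inv. assert (0 < exp (e1 t2) - exp (e2 t2)). { apply (Rmult_lt_reg_l _ _ _ K). lra. } lra. }
  assert (D2 := ln_diff t2 ltac:(lra)). fold (e1 t2) (e2 t2) in D2.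
  assert (L2 : ln (m - t2) <= ln (m + t2)) by (apply ln_le'; lra).
  assert (Q2 : qq t2 > 0).
  { destruct (Rle_dec (qq t2) 0) as [hq|hq]; [|lra].
    assert ((ln (m + t2) - ln (m - t2)) * qq t2 <= 0) by nra.
    assert ((ln (m + t2) - ln (m - t2)) * qq t2 / (2 * s2) <= 0).
    { unfold Rdiv. assert (0 < / (2 * s2)) by (apply Rinv_0_lt_compat; lra). nra. }
    lra. }
  assert (Q1 : qq t1 >= qq t2).
  { unfold qq. rewrite <- !ln_mult by lra.
    assert (ln ((m - t2) * (m + t2)) <= ln ((m - t1) * (m + t1))) by (apply ln_le'; nra). lra. }
  assert (D1 := ln_diff t1 ltac:(lra)). fold (e1 t1) (e2 t1) in D1.
  assert (L1 : ln (m - t1) <= ln (m + t1)) by (apply ln_le'; lra).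
  assert (e2 t1 <= e1 t1).
  { assert (0 <= (ln (m + t1) - ln (m - t1)) * qq t1 / (2 * s2)).
    { unfold Rdiv. assert (0 < / (2 * s2)) by (apply Rinv_0_lt_compat; lra).
      apply Rmult_le_pos; [|lra]. apply Rmult_le_pos; lra. }
    lra. }
  assert (exp (e2 t1) <= exp (e1 t1)) by (apply exp_le'; auto).
  nra.
Qed.
End LN.

Lemma keyR3 mu s2 m : 0 < s2 -> KEYR (normal_density mu s2) exp m.
Proof.
  intros hs b hb. exists (ln (2 * m)). intros u v pF pG huv hv.
  destruct (Rle_dec m (exp u)) as [hmu|hmu].
  + apply key_trivial; auto. intros z hz. split. 2: left; apply nd_pos; auto.
    assert (exp u <= exp z) by (apply exp_le'; lra). lra.
  + assert (hu0 : 0 < exp u) by apply exp_pos.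
    assert (hm : 0 < m) by lra.
    set (s := m - exp u).
    apply (key_struct _ exp m b u v s (fun t => ln (m - t)) (fun t => ln (m + t))
               (fun t => - / (m - t)) (fun t => / (m + t))); auto.
    * unfold s; lra.
    * rewrite Rminus_0_r, Rplus_0_r; auto.
    * unfold s. replace (m - (m - exp u)) with (exp u) by ring. apply ln_exp.
    * eapply Rle_trans; [|exact hv]. apply ln_le'; unfold s; lra.
    * intros t ht. unfold s in ht.
      assert (eu : u = ln (m - s)).
      { unfold s. replace (m - (m - exp u)) with (exp u) by ring. rewrite ln_exp; auto. }
      rewrite eu. unfold s in *.
      repeat split; apply ln_le'; lra.
    * intros t ht. unfold s in ht. split; dauto; try reflexivity; try (simpl; lra).
      all: simpl; field; lra.
    * intros t ht. unfold s in ht. split; rewrite exp_ln by lra; ring.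
    * intros z hz. split. apply nd_cont. split. apply C_of_D with (l := exp z); apply D_exp. left; apply nd_pos; auto.
    * intros z hz. unfold s in *.
      assert (exp (ln (m + (m - exp u))) <= exp z) by (apply exp_le'; lra).
      rewrite exp_ln in H by lra. lra.
    * intros t1 t2 h1 h12 h2. unfold s in h2.
      replace (- (normal_density mu s2 (ln (m + t2)) * / (m + t2) + normal_density mu s2 (ln (m - t2)) * - / (m - t2)))
        with (normal_density mu s2 (ln (m - t2)) * / (m - t2) - normal_density mu s2 (ln (m + t2)) * / (m + t2)) by ring.
      replace (- (normal_density mu s2 (ln (m + t1)) * / (m + t1) + normal_density mu s2 (ln (m - t1)) * - / (m - t1)))
        with (normal_density mu s2 (ln (m - t1)) * / (m - t1) - normal_density mu s2 (ln (m + t1)) * / (m + t1)) by ring.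
      apply ln_cross; auto; lra.
Qed.

Definition RIc (f : R -> R) (cf : forall x, continuity_pt f x) (a b : R) : Riemann_integrable f a b :=
  match Rle_dec a b with
  | left h => continuity_implies_RiemannInt h (fun x _ => cf x)
  | right h => RiemannInt_P1 (continuity_implies_RiemannInt (Rlt_le _ _ (Rnot_le_lt _ _ h)) (fun x _ => cf x))
  end.

Lemma prim_global f : (forall x, continuity_pt f x) ->
  exists F, forall x, derivable_pt_lim F x (f x).
Proof.
  intros cf. exists (fun y => RiemannInt (RIc f cf 0 y)). intros x0.
  set (a := x0 - 1). set (b := x0 + 1).
  assert (h : a <= b) by (unfold a, b; lra).
  assert (C0 : forall x, a <= x <= b -> continuity_pt f x) by auto.
  set (P := FTC_P1 h C0).
  apply derivable_pt_lim_locally_ext with (a := a) (b := b)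
    (f := fun y => RiemannInt (RIc f cf 0 a) + primitive h P y).
  - unfold a, b; lra.
  - intros z hz. unfold primitive. destruct (Rle_dec a z) as [r1|r1]; [|lra].
    destruct (Rle_dec z b) as [r2|r2]; [|lra].
    apply RiemannInt_P26.
  - apply D_ext with (f := fun y => RiemannInt (RIc f cf 0 a) + primitive h P y) (l := 0 + f x0).
    intros; reflexivity. ring.
    apply D_plus. apply D_const. apply (RiemannInt_P28 (f := f)). unfold a, b; lra.
Qed.

Lemma deriv0_const F a b : (forall x, Rmin a b <= x <= Rmax a b -> derivable_pt_lim F x 0) -> F b = F a.
Proof.
  intros D. destruct (MVT_abs F (fun _ => 0) a b D) as [c [Hc _]].
  rewrite Rabs_R0, Rmult_0_l in Hc. destruct (Req_dec (F b - F a) 0). lra.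
  exfalso. apply Rabs_no_R0 in H. auto.
Qed.

Lemma taylor2 G G1 G2 t0 h M :
  (forall s, Rabs (s - t0) <= Rabs h -> derivable_pt_lim G s (G1 s) /\ derivable_pt_lim G1 s (G2 s) /\ Rabs (G2 s) <= M) ->
  Rabs (G (t0 + h) - G t0 - h * G1 t0) <= M * (h * h).
Proof.
  intros H.
  assert (rng : forall c, Rmin t0 (t0 + h) <= c <= Rmax t0 (t0 + h) -> Rabs (c - t0) <= Rabs h).
  { intros c hc. unfold Rmin, Rmax in hc. destruct (Rle_dec t0 (t0 + h));
    (destruct (Rcase_abs h); [rewrite (Rabs_left h) by lra | rewrite (Rabs_right h) by lra]);
    (destruct (Rcase_abs (c - t0)); [rewrite (Rabs_left (c - t0)) by lra | rewrite (Rabs_right (c - t0)) by lra]); lra. }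
  destruct (MVT_abs (fun s => G s - G t0 - (s - t0) * G1 t0) (fun s => G1 s - G1 t0) t0 (t0 + h)) as [c [Hc Hcr]].
  { intros c hc. destruct (H c (rng c hc)) as [D1 _].
    eapply dM. eapply dM. exact D1. eapply dK; reflexivity. reflexivity.
    eapply dX. eapply dM. eapply dI; reflexivity. eapply dK; reflexivity. reflexivity. eapply dK; reflexivity. reflexivity. ring. }
  replace (G t0 - G t0 - (t0 - t0) * G1 t0) with 0 in Hc by ring.
  replace (t0 + h - t0) with h in Hc by ring. rewrite Rminus_0_r in Hc.
  rewrite Hc.
  assert (rc := rng c Hcr).
  destruct (MVT_abs G1 G2 t0 c) as [d [Hd Hdr]].
  { intros d hd. apply H. assert (Rabs (d - t0) <= Rabs (c - t0)).
    { unfold Rmin, Rmax in hd. destruct (Rle_dec t0 c);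
      (destruct (Rcase_abs (c - t0)); [rewrite (Rabs_left (c - t0)) by lra | rewrite (Rabs_right (c - t0)) by lra]);
      (destruct (Rcase_abs (d - t0)); [rewrite (Rabs_left (d - t0)) by lra | rewrite (Rabs_right (d - t0)) by lra]); lra. }
    lra. }
  rewrite Hd.
  assert (Rabs (d - t0) <= Rabs h).
  { assert (Rabs (d - t0) <= Rabs (c - t0)).
    { unfold Rmin, Rmax in Hdr. destruct (Rle_dec t0 c);
      (destruct (Rcase_abs (c - t0)); [rewrite (Rabs_left (c - t0)) by lra | rewrite (Rabs_right (c - t0)) by lra]);
      (destruct (Rcase_abs (d - t0)); [rewrite (Rabs_left (d - t0)) by lra | rewrite (Rabs_right (d - t0)) by lra]); lra. }
    lra. }
  destruct (H d H0) as [_ [_ HM]].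
  pose proof (Rabs_pos (G2 d)). pose proof (Rabs_pos (c - t0)). pose proof (Rabs_pos h).
  assert (Rabs h * Rabs h = h * h) by (rewrite <- Rabs_mult; apply Rabs_right; nra).
  assert (Rabs (G2 d) * Rabs (c - t0) <= M * Rabs h) by (apply Rmult_le_compat; lra).
  nra.
Qed.

Lemma diff_int (g : R -> R -> R) (D : R -> R) a b t0 K
  (pg : forall t, Riemann_integrable (g t) a b) (pD : Riemann_integrable D a b) :
  a <= b -> 0 <= K ->
  (forall h x, Rabs h <= 1 -> a <= x <= b -> Rabs (g (t0 + h) x - g t0 x - h * D x) <= K * (h * h)) ->
  derivable_pt_lim (fun t => RiemannInt (pg t)) t0 (RiemannInt pD).
Proof.
  intros hab hK H eps heps.
  set (del := Rmin 1 (eps / (K * (b - a) + 1))).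
  assert (hdel : 0 < del). { apply Rmin_pos. lra. apply Rdiv_lt_0_compat; auto. nra. }
  exists (mkposreal del hdel). simpl. intros h hh0 hh.
  assert (h1 : Rabs h <= 1) by (pose proof (Rmin_l 1 (eps / (K * (b - a) + 1))); fold del in H0; lra).
  set (k := fun x => g (t0 + h) x + (-1) * g t0 x).
  assert (pk : Riemann_integrable k a b) by (apply RiemannInt_P10; auto).
  set (k2 := fun x => k x + (- h) * D x).
  assert (pk2 : Riemann_integrable k2 a b) by (apply RiemannInt_P10; auto).
  assert (E1 : RiemannInt pk = RiemannInt (pg (t0 + h)) + (-1) * RiemannInt (pg t0)) by apply RiemannInt_P13.
  assert (E2 : RiemannInt pk2 = RiemannInt pk + (- h) * RiemannInt pD) by apply RiemannInt_P13.
  replace ((RiemannInt (pg (t0 + h)) - RiemannInt (pg t0)) / h - RiemannInt pD) with (RiemannInt pk2 / h)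
    by (rewrite E2, E1; field; auto).
  assert (pa := RiemannInt_P16 pk2).
  assert (A1 := RiemannInt_P17 pk2 pa hab).
  assert (A2 : RiemannInt pa <= K * (h * h) * (b - a)).
  { assert (A := RiemannInt_P19 pa (RiemannInt_P14 a b (K * (h * h))) hab).
    rewrite RiemannInt_P15 in A. apply A. intros x hx. unfold k2, k, fct_cte.
    replace (g (t0 + h) x + -1 * g t0 x + - h * D x) with (g (t0 + h) x - g t0 x - h * D x) by ring.
    apply H; auto; lra. }
  unfold Rdiv. rewrite Rabs_mult, Rabs_inv by auto.
  assert (hp : 0 < Rabs h) by (apply Rabs_pos_lt; auto).
  assert (Rabs (RiemannInt pk2) <= K * (b - a) * Rabs h * Rabs h).
  { assert (E : Rabs h * Rabs h = h * h) by (rewrite <- Rabs_mult; apply Rabs_right; nra).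
    replace (K * (b - a) * Rabs h * Rabs h) with (K * (h*h) * (b-a)) by (rewrite <- E; ring). lra. }
  apply Rle_lt_trans with (K * (b - a) * Rabs h).
  { apply Rmult_le_reg_r with (Rabs h); auto. rewrite Rmult_assoc, Rinv_l by lra. lra. }
  assert (Rabs h < eps / (K * (b - a) + 1)).
  { pose proof (Rmin_r 1 (eps / (K * (b - a) + 1))). fold del in H1. lra. }
  assert (0 <= K * (b - a)) by nra.
  apply Rle_lt_trans with ((K * (b - a) + 1) * Rabs h). nra.
  apply Rmult_lt_reg_r with (/ (K * (b - a) + 1)). apply Rinv_0_lt_compat; lra.
  replace ((K * (b - a) + 1) * Rabs h * / (K * (b - a) + 1)) with (Rabs h) by (field; lra). exact H1.
Qed.

Definition phi x := exp (- (x * x)).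
Lemma phi_cont x : continuity_pt phi x.
Proof. unfold phi. eapply C_of_D. dauto; reflexivity. Qed.

Lemma C_inv f x : continuity_pt f x -> f x <> 0 -> continuity_pt (fun y => / f y) x.
Proof. intros; apply (continuity_pt_inv f); auto. Qed.

Definition gq t x := exp (- (t * t) * (1 + x * x)) * / (1 + x * x).
Definition Dq t x := -2 * t * exp (- (t * t) * (1 + x * x)).

Lemma pos1 x : 0 < 1 + x * x.
Proof. nra. Qed.

Lemma gq_cont t x : continuity_pt (gq t) x.
Proof.
  unfold gq. apply C_mult. eapply C_of_D. dauto; reflexivity.
  apply C_inv. eapply C_of_D. dauto; reflexivity. pose proof (pos1 x); lra.
Qed.
Lemma Dq_cont t x : continuity_pt (Dq t) x.
Proof. unfold Dq. eapply C_of_D. dauto; reflexivity. Qed.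

Lemma exp_nonpos_le1 y : y <= 0 -> exp y <= 1.
Proof. intros. rewrite <- exp_0. apply exp_le'; auto. Qed.

Lemma gq_taylor t0 h x : Rabs h <= 1 -> 0 <= x <= 1 ->
  Rabs (gq (t0 + h) x - gq t0 x - h * Dq t0 x) <= (2 + 8 * ((Rabs t0 + 1) * (Rabs t0 + 1))) * (h * h).
Proof.
  intros hh hx. set (c := 1 + x * x). assert (hc : 1 <= c <= 2) by (unfold c; nra).
  apply (taylor2 (fun t => gq t x) (fun t => Dq t x) (fun t => (-2 + 4 * (t * t) * c) * exp (- (t * t) * c))).
  intros s hs. split; [|split].
  - unfold gq, Dq. fold c. dauto; try reflexivity. simpl. field. lra.
  - unfold Dq. fold c. dauto; try reflexivity. simpl. ring.
  - rewrite Rabs_mult. rewrite (Rabs_right (exp _)) by (left; apply exp_pos).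
    assert (E : exp (- (s * s) * c) <= 1) by (apply exp_nonpos_le1; nra).
    assert (Rabs (-2 + 4 * (s * s) * c) <= 2 + 8 * ((Rabs t0 + 1) * (Rabs t0 + 1))).
    { assert (Rabs s <= Rabs t0 + 1).
      { replace s with (t0 + (s - t0)) by ring. eapply Rle_trans. apply Rabs_triang. lra. }
      assert (s * s <= (Rabs t0 + 1) * (Rabs t0 + 1)).
      { assert (ES : s * s = Rabs s * Rabs s) by (rewrite <- Rabs_mult; rewrite Rabs_right; nra).
        rewrite ES. pose proof (Rabs_pos s). apply Rmult_le_compat; lra. }
      destruct (Rcase_abs (-2 + 4 * (s * s) * c)); [rewrite Rabs_left | rewrite Rabs_right]; nra. }
    pose proof (exp_pos (- (s * s) * c)). pose proof (Rabs_pos (-2 + 4 * (s * s) * c)). nra.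
Qed.

Section Gauss.
Variable E : R -> R.
Hypothesis HE : forall x, derivable_pt_lim E x (phi x).

Definition J t := RiemannInt (RIc (gq t) (gq_cont t) 0 1).

Lemma J_deriv t0 : derivable_pt_lim J t0 (RiemannInt (RIc (Dq t0) (Dq_cont t0) 0 1)).
Proof.
  apply (diff_int gq (Dq t0) 0 1 t0 (2 + 8 * ((Rabs t0 + 1) * (Rabs t0 + 1)))
     (fun t => RIc (gq t) (gq_cont t) 0 1)).
  lra. pose proof (Rabs_pos t0). nra.
  intros h x hh hx. apply gq_taylor; auto.
Qed.

Lemma Dint t : RiemannInt (RIc (Dq t) (Dq_cont t) 0 1) = -2 * exp (- (t * t)) * (E t - E 0).
Proof.
  rewrite (FTC_gen _ (fun x => -2 * exp (- (t * t)) * E (t * x)) 0 1); [| lra | intros; apply Dq_cont |].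
  - rewrite Rmult_1_r, Rmult_0_r. ring.
  - intros x hx. eapply dX. eapply dK; reflexivity.
    eapply dC with (f := fun y => t * y). dauto; reflexivity. apply HE. reflexivity.
    unfold Dq, phi. replace (- (t * t) * (1 + x * x)) with (- (t * t) + - ((t * x) * (t * x))) by ring.
    rewrite exp_plus. ring.
Qed.

Lemma J0 : J 0 = PI / 4.
Proof.
  unfold J. rewrite (FTC_gen _ atan 0 1); [| lra | intros; apply gq_cont |].
  - rewrite atan_1, atan_0. ring.
  - intros x hx. apply D_ext with (f := atan) (l := / (1 + x ^ 2)). intros; reflexivity.
    unfold gq. rewrite Rmult_0_r, Ropp_0, Rmult_0_l, exp_0. simpl. rewrite Rmult_1_r, Rmult_1_l. reflexivity.
    apply derivable_pt_lim_atan.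
Qed.

Lemma F_const t : (E t - E 0) * (E t - E 0) + J t = PI / 4.
Proof.
  replace (PI / 4) with ((E 0 - E 0) * (E 0 - E 0) + J 0) by (rewrite J0; ring).
  apply (deriv0_const (fun t => (E t - E 0) * (E t - E 0) + J t) 0 t).
  intros x _. eapply dP. eapply dX. eapply dM. apply HE. eapply dK; reflexivity. reflexivity.
  eapply dM. apply HE. eapply dK; reflexivity. reflexivity. reflexivity.
  apply J_deriv. rewrite Dint. unfold phi. ring.
Qed.
End Gauss.

Lemma J_bounds t : 0 <= J t <= exp (- (t * t)).
Proof.
  unfold J. split.
  - apply RI_nonneg. lra. intros x hx. unfold gq. left. apply Rmult_lt_0_compat. apply exp_pos.
    apply Rinv_0_lt_compat, pos1.
  - assert (A := RiemannInt_P19 (RIc (gq t) (gq_cont t) 0 1) (RiemannInt_P14 0 1 (exp (- (t * t)))) ltac:(lra)).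
    rewrite RiemannInt_P15 in A. replace (exp (- (t * t))) with (exp (- (t * t)) * (1 - 0)) by ring.
    apply A. intros x hx. unfold gq, fct_cte.
    assert (exp (- (t * t) * (1 + x * x)) <= exp (- (t * t))) by (apply exp_le'; nra).
    assert (/ (1 + x * x) <= 1). { rewrite <- Rinv_1. apply Rinv_le_contravar. lra. nra. }
    assert (0 < / (1 + x * x)) by (apply Rinv_0_lt_compat, pos1).
    pose proof (exp_pos (- (t * t) * (1 + x * x))). nra.
Qed.

Definition SS := sqrt PI / 2.
Lemma SS_pos : 0 < SS.
Proof. unfold SS. pose proof (sqrt_lt_R0 PI PI_RGT_0). lra. Qed.
Lemma SS_sq : SS * SS = PI / 4.
Proof. unfold SS. pose proof (sqrt_sqrt PI (Rlt_le _ _ PI_RGT_0)). nra. Qed.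

Section G2.
Variable E : R -> R.
Hypothesis HE : forall x, derivable_pt_lim E x (phi x).

Lemma E_mono a b : a <= b -> E a <= E b.
Proof.
  intros hab. assert (- E b <= - E a); [|lra].
  apply (deriv_nonpos_le (fun x => - E x) (fun x => - phi x) a b hab).
  intros; eapply dO; [apply HE|reflexivity].
  intros; unfold phi; pose proof (exp_pos (- (x * x))); lra.
Qed.

Lemma Y_pos_bound t : 0 <= t -> Rabs (E t - E 0 - SS) <= exp (- (t * t)) / SS.
Proof.
  intros ht. pose proof (F_const E HE t) as F. pose proof (J_bounds t) as [J1 J2].
  pose proof SS_pos. pose proof SS_sq. pose proof (E_mono 0 t ht).
  set (Y := E t - E 0) in *.
  assert (hY : 0 <= Y) by (unfold Y; lra).
  assert (Y <= SS). { destruct (Rle_dec Y SS) as [h|h]; auto. assert (SS * SS < Y * Y) by (apply Rmult_le_0_lt_compat; lra). lra. }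
  assert ((SS - Y) * SS <= exp (- (t * t))). { assert ((SS - Y) * SS <= (SS - Y) * (SS + Y)) by (apply Rmult_le_compat_l; lra). nra. }
  rewrite Rabs_left1 by lra.
  apply Rmult_le_reg_r with SS; auto. unfold Rdiv. rewrite Rmult_assoc, Rinv_l by lra. lra.
Qed.

Lemma Y_neg_bound t : t <= 0 -> Rabs (E t - E 0 + SS) <= exp (- (t * t)) / SS.
Proof.
  intros ht. pose proof (F_const E HE t) as F. pose proof (J_bounds t) as [J1 J2].
  pose proof SS_pos. pose proof SS_sq. pose proof (E_mono t 0 ht).
  set (Y := E t - E 0) in *.
  assert (hY : Y <= 0) by (unfold Y; lra).
  assert (- SS <= Y). { destruct (Rle_dec (- SS) Y) as [h|h]; auto. assert (SS * SS < (-Y) * (-Y)) by (apply Rmult_le_0_lt_compat; lra). lra. }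
  assert ((Y + SS) * SS <= exp (- (t * t))). { assert ((Y + SS) * SS <= (Y + SS) * (SS - Y)) by (apply Rmult_le_compat_l; lra). nra. }
  rewrite Rabs_right by lra.
  apply Rmult_le_reg_r with SS; auto. unfold Rdiv. rewrite Rmult_assoc, Rinv_l by lra. lra.
Qed.
End G2.

Lemma exp_small b eta : 0 < eta -> / eta + 1 <= Rabs b -> exp (- (b * b)) < eta.
Proof.
  intros he hb.
  assert (hbb : / eta < b * b).
  { assert (b * b = Rabs b * Rabs b) by (rewrite <- Rabs_mult; rewrite Rabs_right; nra).
    pose proof (Rinv_0_lt_compat eta he). nra. }
  rewrite exp_Ropp. assert (1 + b * b <= exp (b * b)) by apply exp_ineq1_le.
  rewrite <- (Rinv_inv eta). apply Rinv_lt_contravar.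
  pose proof (Rinv_0_lt_compat eta he). pose proof (exp_pos (b*b)). nra. lra.
Qed.

Lemma normal_int mu s2 : 0 < s2 -> int_R (normal_density mu s2) 1.
Proof.
  intros hs. destruct (prim_global phi phi_cont) as [E HE].
  set (sg := sqrt (2 * s2)).
  assert (hsg : 0 < sg) by (apply sqrt_lt_R0; lra).
  assert (sg2 : sg * sg = 2 * s2) by (apply sqrt_sqrt; lra).
  assert (hpi : 0 < sqrt PI) by (apply sqrt_lt_R0, PI_RGT_0).
  assert (Esq : sqrt (2 * PI * s2) = sqrt PI * sg).
  { unfold sg. rewrite <- sqrt_mult by (pose proof PI_RGT_0; lra). f_equal; ring. }
  assert (FT : forall u v (pr : Riemann_integrable (normal_density mu s2) u v), u <= v ->
     RiemannInt pr = ((E ((v - mu) / sg) - E 0) - (E ((u - mu) / sg) - E 0)) / sqrt PI).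
  { intros u v pr huv.
    rewrite (FTC_gen _ (fun z => E ((z - mu) / sg) / sqrt PI) u v pr huv); [field; lra| intros; apply nd_cont|].
    intros x hx. eapply dX. eapply dC with (f := fun z => (z - mu) / sg). dauto; reflexivity. apply HE. reflexivity.
    eapply dK; reflexivity.
    unfold normal_density, phi. rewrite Esq.
    replace (- ((x - mu) / sg * ((x - mu) / sg))) with (- (x - mu) ^ 2 / (2 * s2)).
    2: { rewrite <- sg2. field. lra. }
    simpl. field. lra. }
  split.
  - intros u v huv. constructor. apply continuity_implies_RiemannInt; auto. intros; apply nd_cont.
  - intros eps heps.
    set (eta := eps * SS * sqrt PI / 2).
    assert (heta : 0 < eta) by (unfold eta; pose proof SS_pos; apply Rdiv_lt_0_compat; [|lra]; apply Rmult_lt_0_compat; [apply Rmult_lt_0_compat|]; lra).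
    exists (Rabs mu + sg * (/ eta + 1) + 1).
    intros u v pr hu hv huv. rewrite FT by auto.
    pose proof (Rle_abs mu). pose proof (Rle_abs (- mu)). rewrite Rabs_Ropp in H0.
    assert (0 < / eta) by (apply Rinv_0_lt_compat; auto).
    set (a := (u - mu) / sg). set (b := (v - mu) / sg).
    assert (hb : / eta + 1 <= b).
    { unfold b. apply Rmult_le_reg_r with sg; auto. unfold Rdiv. rewrite Rmult_assoc, Rinv_l by lra. nra. }
    assert (ha : a <= - (/ eta + 1)).
    { unfold a. apply Rmult_le_reg_r with sg; auto. unfold Rdiv. rewrite Rmult_assoc, Rinv_l by lra. nra. }
    assert (B1 := Y_pos_bound E HE b ltac:(lra)).
    assert (B2 := Y_neg_bound E HE a ltac:(lra)).
    assert (X1 := exp_small b eta heta ltac:(rewrite Rabs_right; lra)).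
    assert (X2 := exp_small a eta heta ltac:(rewrite Rabs_left; lra)).
    pose proof SS_pos.
    assert (SSpi : 2 * SS = sqrt PI) by (unfold SS; field).
    replace ((E b - E 0 - (E a - E 0)) / sqrt PI - 1) with (((E b - E 0 - SS) - (E a - E 0 + SS)) / sqrt PI)
      by (rewrite <- SSpi; field; lra).
    unfold Rdiv. rewrite Rabs_mult, (Rabs_right (/ sqrt PI)) by (left; apply Rinv_0_lt_compat; auto).
    assert (R1 : Rabs (E b - E 0 - SS) < eta / SS).
    { eapply Rle_lt_trans. exact B1. unfold Rdiv. apply Rmult_lt_compat_r. apply Rinv_0_lt_compat; auto. auto. }
    assert (R2 : Rabs (E a - E 0 + SS) < eta / SS).
    { eapply Rle_lt_trans. exact B2. unfold Rdiv. apply Rmult_lt_compat_r. apply Rinv_0_lt_compat; auto. auto. }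
    assert (R3 : Rabs ((E b - E 0 - SS) - (E a - E 0 + SS)) < 2 * (eta / SS)).
    { unfold Rminus at 1. eapply Rle_lt_trans. apply Rabs_triang. rewrite Rabs_Ropp. lra. }
    apply Rlt_le_trans with (2 * (eta / SS) * / sqrt PI).
    apply Rmult_lt_compat_r. apply Rinv_0_lt_compat; auto. exact R3.
    right. unfold eta. field. split; lra.
Qed.

Lemma part3 : forall mu s2 m : R, 0 < s2 ->
     expect_R (normal_density mu s2) (fun z => exp z) (fun y => y) m ->
     heavy_on_left (expect_R (normal_density mu s2) (fun z => exp z - m)).
Proof.
  intros mu s2 m hs Em.
  apply (heavy_R _ exp); auto.
  - intros z. split. apply nd_cont. eapply C_of_D; apply D_exp.
  - intros z. left; apply nd_pos; auto.
  - apply normal_int; auto.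
  - apply keyR3; auto.
Qed.

Theorem mainTheorem14 :
  (forall a lam C m : R, 0 < a -> 0 < lam -> 0 < C ->
     int_pos (gamma_density C a lam) 1 ->
     expect_pos (gamma_density C a lam) (fun y => y) (fun y => y) m ->
     heavy_on_left (expect_pos (gamma_density C a lam) (fun y => y - m))) /\
  (forall a lam m : R, 0 < a -> 0 < lam ->
     expect_pos (exp_density lam) (fun z => a * exp z) (fun y => y) m ->
     heavy_on_left (expect_pos (exp_density lam) (fun z => a * exp z - m))) /\
  (forall mu s2 m : R, 0 < s2 ->
     expect_R (normal_density mu s2) (fun z => exp z) (fun y => y) m ->
     heavy_on_left (expect_R (normal_density mu s2) (fun z => exp z - m))).
Proof.
  split; [exact part1|split; [exact part2|exact part3]].
Qed.
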